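(* Let $d\ge 2$ and $n\ge 2$ be integers and let the $n_c=d^n$ clients be identified with the set $\{0,1,\dots,d-1\}^n$ (grouped by the $d^n$-hypermesh). For each coordinate $k\in\{1,\dots,n\}$ and each client $a$, the group of $a$ in direction $k$ is the set of $d$ clients that agree with $a$ in every coordinate except possibly the $k$-th; thus every client belongs to exactly $n$ groups. Let $M$ be the set of malicious clients, let $\mathcal V$ be the set of groups containing at least one malicious client (the flagged groups), and let the set $I$ of clients identified as malicious consist of those clients all $n$ of whose groups lie in $\mathcal V$. Then (i) every malicious client is identified, i.e. $M\subseteq I$ (true positive rate $100\%$); and (ii) no benign client is identified, i.e. $I\setminus M=\emptyset$ (false positive rate $0\%$), provided that $|M|\le n$, where the case $|M|=n$ is allowed only when at least two malicious clients lie in the same group.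
   Context: This models the detection stage of a secret-sharing-based privacy-preserving quantized federated learning protocol: the server can only examine per-group aggregates, marks a group as suspicious (places it in $\mathcal V$) exactly when it contains a malicious client, and declares a client malicious when all $n$ groups it belongs to are in $\mathcal V$. Two clients are neighbors if their identifiers differ in exactly one coordinate; each group (an edge of the hypermesh) consists of $d$ mutually neighboring clients. *)

(* Defs.v *)
From mathcomp Require Import all_boot.
Set Implicit Arguments. Unset Strict Implicit. Unset Printing Implicit Defensive.

Definition client (d n : nat) := {ffun 'I_n -> 'I_d}.

Definition group (d n : nat) (a : client d n) (k : 'I_n) : {set client d n} :=
  [set b : client d n | [forall j : 'I_n, (j != k) ==> (b j == a j)]].

Definition groups (d n : nat) : {set {set client d n}} :=
  [set group a k | a : client d n, k : 'I_n].

Definition flagged (d n : nat) (M : {set client d n}) : {set {set client d n}} :=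
  [set G in groups d n | G :&: M != set0].

Definition identified (d n : nat) (M : {set client d n}) : {set client d n} :=
  [set a : client d n | [forall k : 'I_n, group a k \in flagged M]].

(* Main.v *)
Require Import Defs.
From mathcomp Require Import all_boot.

Lemma agree_grp (d n : nat) (m x : client d n) (k j : 'I_n) :
  m \in group x k -> j != k -> m j = x j.
Proof. by rewrite inE => /forallP H jk; apply/eqP; exact: (implyP (H j) jk). Qed.

Arguments agree_grp {d n m x k j}.

Lemma diff_at (d n : nat) (m x : client d n) (k : 'I_n) :
  m \in group x k -> m != x -> m k != x k.
Proof.
move=> mG; apply: contra => /eqP e; apply/eqP/ffunP => j.
by case: (eqVneq j k) => [->//|jk]; exact: agree_grp mG jk.
Qed.

Theorem theorem1 (d n : nat) (M : {set client d n}) :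
  2 <= d -> 2 <= n ->
  (M \subset identified M) /\
  ((#|M| < n \/
    (#|M| = n /\
     exists a b : client d n, exists k : 'I_n,
       [/\ a \in M, b \in M, a != b & b \in group a k])) ->
   identified M :\: M = set0).
Proof.
move=> _ _; split.
  apply/subsetP => a aM; rewrite inE; apply/forallP => k; rewrite inE; apply/andP; split.
    by apply: imset2_f.
  apply/set0Pn; exists a; rewrite inE aM andbT inE; apply/forallP => j; exact/implyP.
move=> Hcase; apply/eqP/set0Pn => -[x]; rewrite in_setD => /andP[xM].
rewrite inE => /forallP xI.
have Hk k : exists m, [&& m \in M, m \in group x k & m != x].
  move: (xI k); rewrite inE => /andP[_ /set0Pn[m]]; rewrite inE => /andP[mG mM].
  exists m; rewrite mM mG /=; apply/negP => /eqP e; by move: xM; rewrite -e mM.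
have [f Hf] : exists f : 'I_n -> client d n,
    forall k, [&& f k \in M, f k \in group x k & f k != x].
  by exists (fun k => xchoose (Hk k)) => k; exact: (xchooseP (Hk k)).
have Fd k : f k k != x k.
  by case/and3P: (Hf k) => _ G ne; exact: diff_at G ne.
have Fa i j : j != i -> f i j = x j.
  by case/and3P: (Hf i) => _ G _; exact: agree_grp G.
have finj : injective f.
  move=> i j eij; apply/eqP; apply: contraT => nij.
  by move: (Fd j); rewrite -eij Fa ?eqxx // eq_sym.
have cardF : #|f @: setT| = n by rewrite card_imset // cardsT card_ord.
have subF : f @: setT \subset M.
  by apply/subsetP => _ /imsetP[k _ ->]; case/and3P: (Hf k).
case: Hcase => [lt|[eqM [a [b [k [aM bM ab bG]]]]]].
  by move: (subset_leq_card subF); rewrite cardF leqNgt lt.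
have eM : f @: setT = M.
  apply/eqP. rewrite eqEcard subF cardF eqM.
  by rewrite leqnn.

move: aM bM ab bG; rewrite -eM => /imsetP[i _ ->] /imsetP[j _ ->] ab bG.
have ij : i != j by apply: contraNneq ab => ->.
have ik : i = k.
  apply/eqP; apply: contraT => ik.
  by move: (Fd i); rewrite -(agree_grp bG ik) Fa ?eqxx // eq_sym.
have jk : j = k.
  apply/eqP; apply: contraT => jk.
  by move: (Fd j); rewrite (agree_grp bG jk) Fa ?eqxx // eq_sym.
by move: ij; rewrite ik jk eqxx.
Qed.
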